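(* Let $n\ge k\ge 2$ be integers. Then \[ \mathsf{opt}_{\operatorname{bandit}}^{\operatorname{det}}(n,k)\le k\ln(n/k)+k-1. \]
   Context: Prediction with expert advice in the realizable case: $\mathcal{Y}=\{1,\dots,k\}$, $\mathcal{X}=[k]^n$, experts $h_i(x)=x_i$, $i=1,\dots,n$. $\mathcal{P}_0$ is the set of finite sequences of examples in $\mathcal{X}\times\mathcal{Y}$ consistent with some $h_i$ (no errors). Bandit feedback: each round the adversary presents $x_t$, a deterministic learner predicts $\hat y_t$ as a function of past observations and $x_t$, and learns only whether $\hat y_t$ equals the true label $y_t$. $\mathsf{opt}_{\operatorname{bandit}}^{\operatorname{det}}(n,k)$ is the infimum over deterministic learners of the supremum over $S\in\mathcal{P}_0$ of the number of mistakes ($\hat y_t\ne y_t$). *)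

(* Defs.v *)
From mathcomp Require Import all_boot all_order all_algebra.
From mathcomp Require Import all_classical all_reals all_analysis.
Set Implicit Arguments. Unset Strict Implicit. Unset Printing Implicit Defensive.
Import Order.TTheory GRing.Theory Num.Theory.
Local Open Scope classical_set_scope.
Local Open Scope ring_scope.

(* Instance space X = [k]^n, label space Y = [k] (labels 0..k-1 for 1..k). *)
Definition inst (n k : nat) := {ffun 'I_n -> 'I_k}.
Definition example (n k : nat) := (inst n k * 'I_k)%type.

Definition expert (n k : nat) (i : 'I_n) (x : inst n k) : 'I_k := x i.

Definition realizable (n k : nat) (S : seq (example n k)) : Prop :=
  exists i : 'I_n, all (fun e : example n k => expert i e.1 == e.2) S.

(* What the learner observes in a round: instance, its prediction, and the
   bandit feedback bit [prediction == true label]. *)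
Definition obs (n k : nat) := (inst n k * 'I_k * bool)%type.

Definition learner (n k : nat) := seq (obs n k) -> inst n k -> 'I_k.

Fixpoint run (n k : nat) (L : learner n k) (hist : seq (obs n k))
    (S : seq (example n k)) : nat :=
  match S with
  | [::] => 0%N
  | e :: S' =>
      let yh := L hist e.1 in
      ((yh != e.2) + run L (rcons hist (e.1, yh, yh == e.2)) S')%N
  end.

Definition mistakes (n k : nat) (L : learner n k) (S : seq (example n k)) : nat :=
  run L [::] S.

Definition opt_bandit_det (R : realType) (n k : nat) : \bar R :=
  ereal_inf [set ereal_sup [set ((mistakes L S)%:R : R)%:E | S in @realizable n k]
            | L in [set: learner n k]].

(* Main.v *)
Require Import Defs.
From mathcomp Require Import all_boot all_order all_algebra.
From mathcomp Require Import all_classical all_reals all_analysis.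
From mathcomp Require Import ring lra.
Import Order.TTheory GRing.Theory Num.Theory.
Local Open Scope ring_scope.
Set Implicit Arguments. Unset Strict Implicit. Unset Printing Implicit Defensive.

Definition vs (n k : nat) (hist : seq (obs n k)) : {set 'I_n} :=
  [set i | all (fun o : obs n k => (o.1.1 i == o.1.2) == o.2) hist].

Definition plur (n k : nat) (y0 : 'I_k) (V : {set 'I_n}) (x : inst n k) : 'I_k :=
  [arg max_(y > y0) #|V :&: [set i | x i == y]|].

Definition Lp (n k : nat) (y0 : 'I_k) : learner n k :=
  fun hist x => plur y0 (vs hist) x.

Lemma plur_big (n k : nat) (y0 : 'I_k) (V : {set 'I_n}) (x : inst n k) :
  (#|V| <= k * #|V :&: [set i | x i == plur y0 V x]|)%N.
Proof.
rewrite /plur; case: arg_maxnP => // y _ Hmax.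
rewrite -sum1_card (partition_big (fun i => x i) predT) //=.
apply: (@leq_trans (\sum_(j : 'I_k) #|V :&: [set i | x i == y]|)).
  apply: leq_sum => j _.
  apply: (@leq_trans #|V :&: [set i | x i == j]|); last exact: Hmax.
  by rewrite -sum1_card; apply/eq_leq/eq_bigl => i; rewrite !inE.
by rewrite sum_nat_const card_ord.
Qed.

Lemma vs_rcons (n k : nat) hist (o : obs n k) :
  vs (rcons hist o) = vs hist :&: [set i | (o.1.1 i == o.1.2) == o.2].
Proof. by apply/setP => i; rewrite !inE all_rcons andbC. Qed.

Definition g (R : realType) (k m : nat) : R :=
  if (m <= k)%N then m%:R - 1 else k%:R * ln (m%:R / k%:R) + k%:R - 1.

Lemma g_log (R : realType) (k m : nat) : (0 < k)%N -> (k <= m)%N ->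
  g R k m = k%:R * ln (m%:R / k%:R) + k%:R - 1.
Proof.
move=> k0 km; rewrite /g; case: ifP => // mk.
have -> : m = k by apply/eqP; rewrite eqn_leq mk km.
by rewrite divff ?ln1 ?mulr0 ?add0r // pnatr_eq0 -lt0n.
Qed.

Lemma ln_ratio_ge0 (R : realType) (k m : nat) : (0 < k)%N -> (k <= m)%N ->
  0 <= ln (m%:R / k%:R : R).
Proof.
move=> k0 km; apply: ln_ge0.
by rewrite ler_pdivlMr ?ltr0n // mul1r ler_nat.
Qed.

Lemma g_mono (R : realType) (k a b : nat) : (0 < k)%N -> (a <= b)%N ->
  g R k a <= g R k b.
Proof.
move=> k0 ab; rewrite /g.
case: ifP => ak; case: ifP => bk.
- by rewrite lerB // ler_nat.
- have kb : (k <= b)%N by rewrite ltnW // ltnNge bk.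
  have := ln_ratio_ge0 R k0 kb => H.
  have : (a%:R <= k%:R :> R) by rewrite ler_nat.
  have : 0 <= (k%:R : R) * ln (b%:R / k%:R) by rewrite mulr_ge0.
  lra.
- by move: (leq_trans ab bk); rewrite ak.
- rewrite lerB // lerD2r ler_pM2l ?ltr0n // ler_ln ?posrE ?divr_gt0 ?ltr0n //.
  + by rewrite ler_pM2r ?invr_gt0 ?ltr0n // ler_nat.
  + by rewrite (leq_trans k0) // ltnW // ltnNge ak.
  + by rewrite (leq_trans k0) // ltnW // ltnNge bk.
Qed.

Lemma ln_le_sub1 (R : realType) (x : R) : 0 < x -> ln x <= x - 1.
Proof.
move=> x0; have := expR_ge1Dx (ln x); rewrite lnK ?posrE //; lra.
Qed.

Lemma g_step (R : realType) (k m c : nat) : (0 < k)%N -> (0 < c)%N ->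
  (c <= m)%N -> (m <= k * c)%N -> g R k (m - c) + 1 <= g R k m.
Proof.
move=> k0 c0 cm mkc.
have Hm : ((m - c)%:R : R) = m%:R - c%:R by rewrite natrB.
have c1 : (1 <= c%:R :> R) by rewrite ler1n.
have mk' : (m%:R <= k%:R * c%:R :> R) by rewrite -natrM ler_nat.
case: (leqP m k) => mk.
  rewrite /g mk (leq_trans (leq_subr c m) mk) Hm; lra.
case: (leqP k (m - c)) => mck.
  rewrite !g_log ?(ltnW mk) //.
  have m0 : (0 < m%:R :> R) by rewrite ltr0n (leq_trans k0) // ltnW.
  have mc0 : (0 < (m - c)%:R :> R) by rewrite ltr0n (leq_trans k0).
  have k0' : (0 < k%:R :> R) by rewrite ltr0n.
  have -> : ((m - c)%:R / k%:R : R) = (m%:R / k%:R) * ((m - c)%:R / m%:R).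
    by field; rewrite (gt_eqF m0) (gt_eqF k0').
  rewrite lnM ?posrE ?divr_gt0 //.
  have := ln_le_sub1 (divr_gt0 mc0 m0) => H.
  suff : (k%:R : R) * ((m - c)%:R / m%:R - 1) <= -1.
    move=> H2; have : k%:R * ln ((m - c)%:R / m%:R) <= k%:R * ((m - c)%:R / m%:R - 1 : R).
      by rewrite ler_pM2l.
    rewrite mulrDr; lra.
  have -> : ((m - c)%:R / m%:R - 1 : R) = - (c%:R / m%:R).
    by rewrite Hm; field; rewrite (gt_eqF m0).
  rewrite mulrN lerN2 mulrA ler_pdivlMr // mul1r; lra.
rewrite /g (ltnW mck) (leqNgt m k) mk /=.
have := ln_ratio_ge0 R k0 (ltnW mk) => H.
have : ((m - c)%:R + 1 <= k%:R :> R) by rewrite natr1 ler_nat.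
have : 0 <= (k%:R : R) * ln (m%:R / k%:R) by rewrite mulr_ge0.
lra.
Qed.

Lemma g_ge0 (R : realType) (k m : nat) : (0 < k)%N -> (0 < m)%N -> 0 <= g R k m.
Proof.
move=> k0 m0; apply: le_trans (g_mono R k0 m0).
by rewrite /g k0 subrr.
Qed.

Lemma run_bound (R : realType) (n k : nat) (y0 : 'I_k) (i0 : 'I_n)
  (S : seq (example n k)) (hist : seq (obs n k)) :
  (0 < k)%N ->
  all (fun e : example n k => expert i0 e.1 == e.2) S -> i0 \in vs hist ->
  ((run (Lp y0) hist S)%:R : R) <= g R k #|vs hist|.
Proof.
move=> k0; elim: S hist => [|[x y] S IH] hist /=.
  by move=> _ Hi; apply: g_ge0 => //; apply/card_gt0P; exists i0.
rewrite /expert /= => /andP [/eqP Hy HS] Hi.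
set yh := Lp y0 hist x.
have Hi' : i0 \in vs (rcons hist (x, yh, yh == y)).
  by rewrite vs_rcons finset.in_setI Hi inE /= -Hy [yh == _]eq_sym eqxx.
have := IH _ HS Hi'; rewrite vs_rcons /= => IH'.
set V := vs hist in Hi IH' *.
have Hc := cardsID [set i | (x i == yh) == (yh == y)] V.
move: IH'; case: eqP => [Eq|Neq] /= IH'.
  rewrite add0n; apply: le_trans IH' _; apply: g_mono => //.
  by rewrite subset_leq_card // subsetIl.
have E1 : V :&: [set i | (x i == yh) == false] = V :\: [set i | x i == yh].
  by apply/setP => i; rewrite !inE andbC; case: (x i == yh).
have Hc2 := cardsID [set i | x i == yh] V.
have Hb : (#|V| <= k * #|V :&: [set i | x i == yh]|)%N by exact: plur_big.
have c0 : (0 < #|V :&: [set i | x i == yh]|)%N.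
  rewrite lt0n; apply/negP => /eqP H0; move: Hb; rewrite H0 muln0 leqn0.
  by apply/negP; rewrite -lt0n; apply/card_gt0P; exists i0.
have E2 : #|V :\: [set i | x i == yh]| = (#|V| - #|V :&: [set i | x i == yh]|)%N.
  by rewrite -Hc2 addKn.
rewrite E1 E2 in IH'.
have cm : (#|V :&: [set i | x i == yh]| <= #|V|)%N by rewrite -Hc2 leq_addr.
have := g_step R k0 c0 cm Hb.
rewrite natrD mulr1n; lra.
Qed.

Local Open Scope ereal_scope.

Theorem corollary4p4 (R : realType) (n k : nat) :
  (2 <= k)%N -> (k <= n)%N ->
  opt_bandit_det R n k <=
    ((k%:R * ln (n%:R / k%:R) + k%:R - 1)%R : R)%:E.
Proof.
move=> k2 kn.
have k0 : (0 < k)%N by apply: leq_trans k2.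
pose y0 : 'I_k := Ordinal k0.
apply: (@le_trans _ _ (ereal_sup [set ((mistakes (Lp y0) S)%:R : R)%:E | S in @realizable n k])).
  by apply: ereal_inf_lbound; exists (Lp y0).
apply: ge_ereal_sup => _ [S [i0 HS] <-].
rewrite lee_fin -(g_log R k0 kn).
have Hv : vs ([::] : seq (obs n k)) = [set: 'I_n]%SET by apply/setP => i; rewrite !inE.
have := @run_bound R n k y0 i0 S [::] k0 HS.
by rewrite Hv cardsT card_ord; apply; rewrite inE.
Qed.
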